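(* Let $\mathcal{A}\subseteq\mathbb{R}^{m}$ be a nonempty set, let $C:\mathcal{A}\to\mathbb{R}$ be a base objective, and define $E:\mathcal{A}\to[0,\infty)$ by $E(a)=\|\hat{\theta}^k_{t+1}(a)-\theta^k\|^2$ where $\hat{\theta}^k_{t+1}(a)=h^{-k}_\ell(\hat{\theta}^k_t,\hat{\theta}^{-k}_t,a,s_t)$ for an arbitrary map $h^{-k}_\ell$ and fixed $\hat{\theta}^k_t,\hat{\theta}^{-k}_t,s_t,\theta^k$. For $\eta\ge0$ let $\Phi^{\eta}=C+\eta E$. Assume the relevant minima are attained (i.e., $\arg\min_{\mathcal{A}}C$, $\arg\min_{\mathcal{A}}E$ and $\arg\min_{\mathcal{A}}\Phi^\eta$ for the $\eta$ considered are nonempty, and $E$ attains its minimum on $\arg\min_{\mathcal{A}}C$). Let $a^{0}\in\arg\min_{\mathcal{A}}C$ be any minimizer, and for $\eta\ge0$ let $a^{\eta}\in\arg\min_{\mathcal{A}}\Phi^{\eta}$ be any minimizer. Then: (i) for every $\eta>0$, $E(a^{\eta})\le E(a^{0})$; (ii) if $\arg\min_{\mathcal{A}}C\cap\arg\min_{\mathcal{A}}E=\varnothing$, then there exists $\eta^\star>0$ such that for all $\eta>\eta^\star$, $E(a^{\eta})<E(a^{0})$. *)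

(* Defs.v *)
From HB Require Import structures.
From mathcomp Require Import all_boot all_order all_algebra.
From mathcomp Require Import reals.
Set Implicit Arguments. Unset Strict Implicit. Unset Printing Implicit Defensive.
Import Order.TTheory GRing.Theory Num.Theory.
Local Open Scope ring_scope.

Definition sqnorm {R : numDomainType} {n : nat} (v : 'rV[R]_n) : R :=
  \sum_(i < n) (v ord0 i) ^+ 2.

Definition is_argmin {T : Type} {R : numDomainType} (A : T -> Prop) (f : T -> R)
  (a : T) : Prop :=
  A a /\ (forall b, A b -> f a <= f b).

(* Main.v *)
Require Import Defs.
From HB Require Import structures.
From mathcomp Require Import all_boot all_order all_algebra.
From mathcomp Require Import reals.
From mathcomp Require Import lra.
Import Order.TTheory GRing.Theory Num.Theory.
Local Open Scope ring_scope.

Lemma aux2 {R: realFieldType} (ca caeta ca0 ea eaeta ea0 eta : R) :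
  ca0 <= caeta -> caeta + eta*eaeta <= ca + eta*ea ->
  ca - ca0 < eta*(ea0 - ea) -> 0 < eta -> eaeta < ea0.
Proof.
move=> h1 h2 h3 h0; rewrite -(ltr_pM2l h0); rewrite mulrBr in h3; lra.
Qed.
Lemma aux1 {R: realFieldType} (ca0 caeta ea0 eaeta eta : R) :
  ca0 <= caeta -> caeta + eta*eaeta <= ca0 + eta*ea0 -> 0 < eta -> eaeta <= ea0.
Proof. move=> h1 h2 h0; rewrite -(ler_pM2l h0); lra. Qed.
Lemma aux3 {R: realFieldType} (D g eta : R) : 0 <= D -> 0 < g -> D / g + 1 < eta -> D < eta * g.
Proof.
move=> D0 g0 h.
have : (D / g + 1) * g < eta * g by rewrite ltr_pM2r.
rewrite mulrDl divfK ?gt_eqF //; lra.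
Qed.

Theorem corollary3p3 (R : realType) (m p q : nat) (S : Type)
  (A : 'rV[R]_m -> Prop) (C : 'rV[R]_m -> R)
  (h : 'rV[R]_p -> 'rV[R]_q -> 'rV[R]_m -> S -> 'rV[R]_p)
  (thk_t : 'rV[R]_p) (thmk_t : 'rV[R]_q) (s_t : S) (thk : 'rV[R]_p)
  (hA : exists a, A a) :
  let E := fun a => sqnorm (h thk_t thmk_t a s_t - thk) in
  let Phi := fun (eta : R) a => C a + eta * E a in
  (exists a, is_argmin A C a) ->
  (exists a, is_argmin A E a) ->
  (forall eta : R, 0 <= eta -> exists a, is_argmin A (Phi eta) a) ->
  (exists a, is_argmin (fun b => is_argmin A C b) E a) ->
  forall a0, is_argmin A C a0 ->
  (forall eta : R, 0 < eta ->
     forall aeta, is_argmin A (Phi eta) aeta -> E aeta <= E a0) /\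
  ((~ exists a, is_argmin A C a /\ is_argmin A E a) ->
     exists eta_star : R, 0 < eta_star /\
       forall eta : R, eta_star < eta ->
         forall aeta, is_argmin A (Phi eta) aeta -> E aeta < E a0).
Proof.
move=> E Phi _ [as_ [Aas Has]] _ _ a0 [Aa0 Ha0].
split.
  move=> eta eta0 aeta [Aae Hae].
  have hh := Hae a0 Aa0; rewrite /Phi /= in hh.
  move: (Ha0 aeta Aae) hh eta0. apply: aux1.
move=> Hno.
have Hgap : E as_ < E a0.
  rewrite lt_neqAle Has // andbT.
  apply/negP => /eqP Heq; apply: Hno; exists a0; split => //.
  by split => // b Ab; rewrite -Heq; apply: Has.
have D0 : 0 <= C as_ - C a0 by rewrite subr_ge0; apply: Ha0.
have g0 : 0 < E a0 - E as_ by rewrite subr_gt0.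
have q0 : 0 <= (C as_ - C a0) / (E a0 - E as_) by apply: divr_ge0 => //; apply: ltW.
exists ((C as_ - C a0) / (E a0 - E as_) + 1); split.
  by apply: ltr_wpDl.
move=> eta Heta aeta [Aae Hae].
have eta0 : 0 < eta by apply: lt_trans Heta; apply: ltr_wpDl.
have hh := Hae as_ Aas; rewrite /Phi /= in hh.
move: (Ha0 aeta Aae) hh (@aux3 R _ _ _ D0 g0 Heta) eta0; apply: aux2.
Qed.
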